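(* Let $\mathcal{A}$ be a central and essential arrangement in $\mathbb{Q}^l$ as in the context, $\sigma$ a term ordering, and $p$ a prime that is good and $(\sigma,l)$-lucky for $\mathcal{A}$. Then $\chi(\mathcal{A},t)=\chi(\mathcal{A}_p,t)$.
   Context: $\mathcal{A}=\{H_1,\dots,H_n\}$: $n$ distinct linear hyperplanes in $\mathbb{Q}^l$ with $\bigcap H_i=\{0\}$, $H_i=\{\alpha_i=0\}$, $\alpha_i\in\mathbb{Z}[x_1,\dots,x_l]$ a nonzero linear form whose coefficients are not all divisible by any prime, $Q(\mathcal{A})=\prod\alpha_i$. $(\alpha_i)_p$ is the reduction mod $p$; $p$ is good if $\prod(\alpha_i)_p$ is reduced (no $(\alpha_i)_p$ is a scalar multiple of $(\alpha_j)_p$, $i<j$); $\mathcal{A}_p$ is the arrangement in $\mathbb{F}_p^l$ of the hyperplanes $\{(\alpha_i)_p=0\}$. For a term ordering $\sigma$ and nonzero $f\in\mathbb{Z}[x_1,\dots,x_l]$, $\mathrm{LM}_\sigma(f)$ is the leading term times its coefficient $\mathrm{LC}_\sigma(f)$. A minimal strong $\sigma$-Gröbner basis of an ideal $I\subseteq\mathbb{Z}[x_1,\dots,x_l]$ is a finite generating set $G$ of nonzero elements of $I$ such that every nonzero $f\in I$ has $\mathrm{LM}_\sigma(f)$ divisible by some $\mathrm{LM}_\sigma(g)$, $g\in G$, and no $\mathrm{LM}_\sigma(g)$ divides $\mathrm{LM}_\sigma(g')$ for distinct $g,g'\in G$; its set of leading coefficients is independent of the choice. $p$ is $\sigma$-lucky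 for $I$ if it divides none of these leading coefficients; $p$ is $(\sigma,l)$-lucky for $\mathcal{A}$ if it is $\sigma$-lucky for every ideal $\langle\alpha_{i_1},\dots,\alpha_{i_l}\rangle\subseteq\mathbb{Z}[x_1,\dots,x_l]$ with $i_1<\dots<i_l$ and $\operatorname{codim}(H_{i_1}\cap\dots\cap H_{i_l})=l$. For an arrangement $\mathcal{B}$ in $K^l$ with intersection lattice $L(\mathcal{B})$ (all intersections of subfamilies, the empty one being $K^l$, ordered by reverse inclusion), the Möbius function is $\mu(K^l)=1$, $\mu(X)=-\sum_{Y<X}\mu(Y)$, and $\chi(\mathcal{B},t)=\sum_{X\in L(\mathcal{B})}\mu(X)t^{\dim X}$. *)

(* Defs.v *)
From HB Require Import structures.
From mathcomp Require Import all_boot all_order all_algebra.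
From mathcomp Require Import mpoly.

Set Implicit Arguments.
Unset Strict Implicit.
Unset Printing Implicit Defensive.

Import Order.TTheory GRing.Theory Num.Theory.
Local Open Scope ring_scope.

Section Groebner.
Variable l : nat.

Definition term_order (le : rel 'X_{1..l}) : Prop :=
  [/\ reflexive le, antisymmetric le, transitive le, total le &
     [/\ (forall m1 m2 m, le m1 m2 -> le (m1 + m)%MM (m2 + m)%MM) &
      (forall m, le 0%MM m)]].

(* The sigma-leading monomial of f: the le-largest monomial of the support
   (meaningful for f <> 0 and le a term ordering). *)
Definition lmon (le : rel 'X_{1..l}) (f : {mpoly int[l]}) : 'X_{1..l} :=
  foldr (fun m acc => if le acc m then m else acc) 0%MM (msupp f).

Definition lcoef (le : rel 'X_{1..l}) (f : {mpoly int[l]}) : int :=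
  f@_(lmon le f).

Definition term_dvd (le : rel 'X_{1..l}) (g f : {mpoly int[l]}) : bool :=
  (lcoef le g %| lcoef le f)%Z && (lmon le g <= lmon le f)%MM.

Definition in_ideal (gens : seq {mpoly int[l]}) (f : {mpoly int[l]}) : Prop :=
  exists c : seq {mpoly int[l]}, f = \sum_(i < size gens) c`_i * gens`_i.

Definition min_strong_GB (le : rel 'X_{1..l}) (I G : seq {mpoly int[l]}) : Prop :=
  [/\ uniq G,
      (forall g, g \in G -> g != 0) &
     [/\
      (forall g, g \in G -> in_ideal I g),
      (forall f, in_ideal I f -> in_ideal G f),
      (forall f, in_ideal I f -> f != 0 -> exists2 g, g \in G & term_dvd le g f) &
      (forall g g', g \in G -> g' \in G -> g != g' -> ~~ term_dvd le g g')]].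

(* p is sigma-lucky for the ideal generated by I: p divides none of the
   leading coefficients of a minimal strong sigma-Groebner basis (this set
   is independent of the choice of basis). *)
Definition sigma_lucky (le : rel 'X_{1..l}) (I : seq {mpoly int[l]}) (p : nat) : Prop :=
  exists2 G, min_strong_GB le I G &
             forall g, g \in G -> ~~ (p%:Z %| lcoef le g)%Z.

Definition linpoly (a : 'rV[int]_l) : {mpoly int[l]} :=
  \sum_(j < l) (a 0 j)%:MP * 'X_j.

End Groebner.

Section Arrangement.
Variables (K : fieldType) (l n : nat) (a : 'I_n -> 'rV[K]_l).
(* hyperplane H_i = { x in K^l | sum_j a i 0 j * x_j = 0 } *)

Definition formsmx (T0 : {set 'I_n}) : 'M[K]_(l, n) :=
  \matrix_(j < l, i < n) (if i \in T0 then a i 0 j else 0).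

(* the intersection of the H_i, i in S, as a canonical row space of K^l
   (S = set0 gives the whole space K^l) *)
Definition flat (T0 : {set 'I_n}) : 'M[K]_l := <<kermx (formsmx T0)>>%MS.

Definition lattice : seq 'M[K]_l :=
  undup [seq flat T0 | T0 <- enum {set 'I_n}].

(* Moebius function: mu(K^l) = 1, mu(X) = - sum_{Y < X} mu(Y), where
   Y < X in L(A) iff X is strictly contained in Y. Chains have length at
   most l, so l.+1 recursion steps suffice. *)
Fixpoint mobius_rec (k : nat) (X : 'M[K]_l) : int :=
  if k is k'.+1 then
    if X == flat set0 then 1
    else - \sum_(Y <- lattice | (X < Y)%MS) mobius_rec k' Y
  else 0.

Definition mobius (X : 'M[K]_l) : int := mobius_rec l.+1 X.

Definition charpoly_arr : {poly int} :=
  \sum_(X <- lattice) (mobius X)%:P * 'X^(\rank X).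

End Arrangement.

Definition arrQ l n (alpha : 'I_n -> 'rV[int]_l) : 'I_n -> 'rV[rat]_l :=
  fun i => map_mx (fun z : int => z%:~R : rat) (alpha i).

Definition arrP (p : nat) l n (alpha : 'I_n -> 'rV[int]_l) : 'I_n -> 'rV['F_p]_l :=
  fun i => map_mx (fun z : int => z%:~R : 'F_p) (alpha i).

(* Main.v *)
Require Import Defs.
From HB Require Import structures.
From mathcomp Require Import all_boot all_order all_algebra.
From mathcomp Require Import mpoly.
From mathcomp Require Import zify.
Set Implicit Arguments.
Unset Strict Implicit.
Unset Printing Implicit Defensive.
Import Order.TTheory GRing.Theory Num.Theory.
Local Open Scope ring_scope.

Section Gen.
Variables (K : fieldType) (l n : nat) (a : 'I_n -> 'rV[K]_l).

Definition rowsmx (T : {set 'I_n}) : 'M[K]_(n, l) :=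
  \matrix_(i < n, j < l) (if i \in T then a i 0 j else 0).
Definition rho T := \rank (rowsmx T).
Definition indep T := rho T == #|T|.

Lemma formsmxT T : (formsmx a T)^T = rowsmx T.
Proof. by apply/matrixP => i j; rewrite !mxE. Qed.

Lemma rho_le T : (rho T <= l)%N.
Proof. exact: rank_leq_col. Qed.

Lemma rank_flat T : \rank (flat a T) = (l - rho T)%N.
Proof. by rewrite /flat genmxE mxrank_ker -mxrank_tr formsmxT. Qed.

Lemma mul_formsmx m (M : 'M[K]_(m, l)) T r c :
  (M *m formsmx a T) r c = if c \in T then (M *m (a c)^T) r 0 else 0.
Proof.
rewrite !mxE; case: ifP => cT.
  by apply: eq_bigr => j _; rewrite !mxE cT.
by rewrite big1 // => j _; rewrite !mxE cT mulr0.
Qed.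

Lemma sub_flat m (M : 'M[K]_(m, l)) S :
  (M <= flat a S)%MS = [forall c in S, M *m (a c)^T == 0].
Proof.
rewrite /flat genmxE sub_kermx; apply/eqP/forall_inP => [H c cS|H].
  apply/eqP/matrixP => r z; rewrite ord1 mxE.
  have := congr1 (fun X : 'M[K]_(m, n) => X r c) H.
  by rewrite mul_formsmx cS !mxE => ->.
apply/matrixP => r c; rewrite mul_formsmx [RHS]mxE; case: ifP => // cS.
by rewrite (eqP (H c cS)) mxE.
Qed.

Lemma flat_mono (S S' : {set 'I_n}) : S \subset S' -> (flat a S' <= flat a S)%MS.
Proof.
move=> sub; rewrite sub_flat; apply/forall_inP => c cS.
have := submx_refl (flat a S'); rewrite sub_flat => /forall_inP; apply.
exact: (subsetP sub).
Qed.

Lemma flat_le_rho T0 T1 :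
  (flat a T0 <= flat a T1)%MS = (rho (T0 :|: T1) == rho T0).
Proof.
have h1 : (flat a (T0 :|: T1) <= flat a T0)%MS by apply: flat_mono; apply: subsetUl.
have e : (flat a T0 <= flat a T1)%MS = (flat a T0 <= flat a (T0 :|: T1))%MS.
  rewrite !sub_flat; apply/forall_inP/forall_inP => H c.
    rewrite inE => /orP [cT0|cT1]; last exact: H.
    have := submx_refl (flat a T0); rewrite sub_flat => /forall_inP; apply => //.
  by move=> cT1; apply: H; rewrite inE cT1 orbT.
rewrite e.
have := mxrank_leqif_sup h1; rewrite !rank_flat => /leqifP.
case: ifP => _.
  move=> /eqP E; apply/esym/eqP.
  move: E (rho_le T0) (rho_le (T0 :|: T1)).
  generalize (rho T0) (rho (T0 :|: T1)) => x y; lia.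
move=> lt; apply/esym/negbTE.
move: lt (rho_le T0) (rho_le (T0 :|: T1)).
generalize (rho T0) (rho (T0 :|: T1)) => x y; lia.
Qed.

Lemma flat_eqE T0 T1 :
  (flat a T0 == flat a T1) =
  (flat a T0 <= flat a T1)%MS && (flat a T1 <= flat a T0)%MS.
Proof.
apply/eqP/andP => [->|[h1 h2]]; first by rewrite submx_refl.
move: h1 h2; rewrite /flat !genmxE => h1 h2.
by apply/genmxP/andP.
Qed.


Lemma rowsmxU (A B : {set 'I_n}) :
  [disjoint A & B] -> rowsmx (A :|: B) = rowsmx A + rowsmx B.
Proof.
move=> dAB; apply/matrixP => i j; rewrite !mxE inE.
case: (boolP (i \in A)) => iA /=.
  by have := disjointFr dAB iA => ->; rewrite addr0.
by case: (i \in B); rewrite add0r.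
Qed.

Lemma rho_addD (A B : {set 'I_n}) :
  [disjoint A & B] -> (rho (A :|: B) <= rho A + rho B)%N.
Proof. by move=> dAB; rewrite /rho rowsmxU //; apply: mxrank_add. Qed.

Lemma rowsmx_sub (A B : {set 'I_n}) :
  A \subset B -> (rowsmx A <= rowsmx B)%MS.
Proof.
move=> sAB; apply/row_subP => i.
case: (boolP (i \in A)) => iA.
  have -> : row i (rowsmx A) = row i (rowsmx B).
    by apply/rowP => j; rewrite !mxE iA (subsetP sAB).
  exact: row_sub.
have -> : row i (rowsmx A) = 0 by apply/rowP => j; rewrite !mxE (negbTE iA).
exact: sub0mx.
Qed.

Lemma rho_mono (A B : {set 'I_n}) : A \subset B -> (rho A <= rho B)%N.
Proof. by move=> sAB; apply: mxrankS; apply: rowsmx_sub. Qed.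

Lemma rho_add (A B : {set 'I_n}) : (rho (A :|: B) <= rho A + rho B)%N.
Proof.
have -> : A :|: B = A :|: (B :\: A).
  by apply/setP => i; rewrite !inE; case: (i \in A); case: (i \in B).
apply: leq_trans (rho_addD _) _; first by rewrite disjoints_subset; apply/subsetP => x xA; rewrite !inE xA.
by rewrite leq_add2l; apply: rho_mono; apply: subsetDl.
Qed.

Lemma rho1 i : (rho [set i] <= 1)%N.
Proof.
rewrite /rho.
have -> : rowsmx [set i] = (\col_(k < n) ((k == i)%:R : K)) *m a i.
  apply/matrixP => k j; rewrite !mxE big_ord1 !mxE inE.
  by case: eqP => [->|_]; rewrite ?mul1r ?mul0r // [0 in a _ 0 _]ord1.
by apply: leq_trans (mxrankM_maxl _ _) (rank_leq_col _).
Qed.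

Lemma rho_card T : (rho T <= #|T|)%N.
Proof.
move: {2}#|T| (erefl #|T|) => k; elim: k T => [|k IH] T cT.
  have -> : T = set0 by apply/eqP; rewrite -cards_eq0 cT.
  suff e : rowsmx set0 = 0 by rewrite /rho e mxrank0.
  by apply/matrixP => i j; rewrite !mxE inE.
have [i iT] : exists i, i \in T.
  by apply/set0Pn; rewrite -card_gt0 cT.
have -> : T = [set i] :|: (T :\ i) by rewrite setD1K.
apply: leq_trans (rho_add _ _) _.
have cT' : #|T :\ i| = k by move: cT; rewrite (cardsD1 i T) iT; case.
apply: leq_trans (leq_add (rho1 i) (IH _ cT')) _.
by rewrite cardsU1 !inE eqxx /= cT'.
Qed.

Lemma rho0 : rho set0 = 0%N.
Proof. by apply/eqP; rewrite -leqn0 -(cards0 'I_n); apply: rho_card. Qed.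

Lemma indep_sub (A B : {set 'I_n}) : A \subset B -> indep B -> indep A.
Proof.
move=> sAB /eqP iB; rewrite /indep.
have eB : B = A :|: (B :\: A).
  apply/setP => x; rewrite !inE; case: (boolP (x \in A)) => //= xA.
  by rewrite (subsetP sAB _ xA).
have h := rho_add A (B :\: A); rewrite -eB in h.
have h2 := rho_card (B :\: A).
have h3 := rho_card A.
have c : #|B| = (#|A| + #|B :\: A|)%N.
  by rewrite -(cardsID A B) (setIidPr sAB).
apply/eqP; move: h h2 h3 c iB.
generalize (rho A) (rho B) (rho (B :\: A)) #|A| #|B| #|B :\: A| => x y z u v w; lia.
Qed.


Lemma row_rowsmx (T : {set 'I_n}) (i : 'I_n) : i \in T -> row i (rowsmx T) = a i.
Proof. by move=> iT; apply/rowP => j; rewrite !mxE iT; congr (a i _ j); apply/val_inj; rewrite /= ord1. Qed.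

Lemma extend (I T : {set 'I_n}) : I \subset T -> indep I ->
  exists J : {set 'I_n}, [/\ I \subset J, J \subset T, indep J & rho J = rho T].
Proof.
move: {2}(#|T| - #|I|)%N (leqnn (#|T| - #|I|)) => k.
elim: k I => [|k IH] I hk sIT iI.
  exists I; split => //.
  have: I = T.
    by apply/eqP; rewrite eqEcard sIT /=; move: hk; rewrite leqn0 subn_eq0.
  by move ->.
case: (eqVneq (rho I) (rho T)) => eIT; first by exists I; split.
case: (boolP [exists j in T :\: I, rho (j |: I) != rho I]) => [/exists_inP [j jTI nj]|/exists_inPn H]; last first.
  exfalso.
  have sub : (rowsmx T <= rowsmx I)%MS.
    apply/row_subP => i.
    case: (boolP (i \in T)) => iT; last first.
      have -> : row i (rowsmx T) = 0 by apply/rowP => j; rewrite !mxE (negbTE iT).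
      exact: sub0mx.
    rewrite row_rowsmx //.
    case: (boolP (i \in I)) => iI'.
      by rewrite -(row_rowsmx iI'); apply: row_sub.
    have e : rho (i |: I) = rho I.
      by apply/eqP; apply/negPn; apply: H; rewrite inE iI' iT.
    have s1 : (rowsmx I <= rowsmx (i |: I))%MS by apply: rowsmx_sub; apply: subsetUr.
    have := mxrank_leqif_sup s1; rewrite -/(rho I) -/(rho (i |: I)) e => /leqifP.
    rewrite ltnn; case: ifP => // s2 _.
    apply: submx_trans s2.
    rewrite -(row_rowsmx (setU11 i I)); apply: row_sub.
  have := mxrankS sub; rewrite -/(rho T) -/(rho I) => h.
  have := rho_mono sIT; move: eIT h; generalize (rho T) (rho I) => x y.
  move=> /eqP; lia.
move: jTI; rewrite inE => /andP [jI jT].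
have e1 : rho (j |: I) = (rho I).+1.
  have := rho_add [set j] I; have := rho1 j.
  have := rho_mono (subsetUr [set j] I); move: nj.
  generalize (rho (j |: I)) (rho I) (rho [set j]) => x y z; move=> /eqP; lia.
have iI2 : indep (j |: I).
  by rewrite /indep e1 cardsU1 jI (eqP iI).
have sIT2 : j |: I \subset T by rewrite subUset sub1set jT sIT.
have [|J [h1 h2 h3 h4]] := IH (j |: I) _ sIT2 iI2.
  have := cardsU1 j I; rewrite jI => -> /=.
  move: hk; have := subset_leq_card sIT2; rewrite cardsU1 jI.
  rewrite /= add1n. generalize #|I| #|T| => x y; lia.
exists J; split => //.
by apply: subset_trans h1; apply: subsetUr.
Qed.

End Gen.
Section Closure.
Variables (K : fieldType) (l n : nat) (a : 'I_n -> 'rV[K]_l).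

Definition cl (T : {set 'I_n}) : {set 'I_n} := [set i | (flat a T <= flat a [set i])%MS].

Lemma flat_cl T : flat a (cl T) = flat a T.
Proof.
apply/eqP; rewrite flat_eqE; apply/andP; split.
  apply: flat_mono; apply/subsetP => i iT; rewrite inE.
  by apply: flat_mono; rewrite sub1set.
rewrite sub_flat; apply/forall_inP => c; rewrite inE sub_flat => /forall_inP; apply.
by rewrite inE.
Qed.

Lemma cl_flat T0 T1 : flat a T0 = flat a T1 -> cl T0 = cl T1.
Proof. by move=> e; apply/setP => i; rewrite !inE e. Qed.

Lemma cl_id T : cl (cl T) = cl T.
Proof. by apply: cl_flat; apply: flat_cl. Qed.

Definition closeds := [seq T <- enum {set 'I_n} | cl T == T].

Lemma lattice_perm : perm_eq (lattice a) (map (flat a) closeds).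
Proof.
apply: uniq_perm; first exact: undup_uniq.
  rewrite map_inj_in_uniq; first by rewrite filter_uniq // enum_uniq.
  move=> T0 T1; rewrite !mem_filter => /andP [/eqP h0 _] /andP [/eqP h1 _] e.
  by rewrite -h0 -h1; apply: cl_flat.
move=> Y; rewrite mem_undup; apply/mapP/mapP => [[T _ ->]|[T _ ->]].
  exists (cl T); last by rewrite flat_cl.
  by rewrite mem_filter cl_id eqxx mem_enum.
by exists T; rewrite ?mem_enum.
Qed.

End Closure.

Section Transfer.
Variables (K1 K2 : fieldType) (l n : nat).
Variables (a1 : 'I_n -> 'rV[K1]_l) (a2 : 'I_n -> 'rV[K2]_l).
Hypothesis hrho : forall T, rho a1 T = rho a2 T.

Lemma le_tr T0 T1 : (flat a1 T0 <= flat a1 T1)%MS = (flat a2 T0 <= flat a2 T1)%MS.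
Proof. by rewrite !flat_le_rho !hrho. Qed.

Lemma eq_tr T0 T1 : (flat a1 T0 == flat a1 T1) = (flat a2 T0 == flat a2 T1).
Proof. by rewrite !flat_eqE !le_tr. Qed.

Lemma lt_tr T0 T1 : (flat a1 T0 < flat a1 T1)%MS = (flat a2 T0 < flat a2 T1)%MS.
Proof. by rewrite /ltmx !le_tr. Qed.

Lemma rank_tr T : \rank (flat a1 T) = \rank (flat a2 T).
Proof. by rewrite !rank_flat hrho. Qed.

Lemma closeds_tr : closeds a1 = closeds a2.
Proof.
apply: eq_filter => T; congr (_ == _); apply/setP => i; rewrite !inE.
exact: le_tr.
Qed.

Lemma mobius_tr k T : mobius_rec a1 k (flat a1 T) = mobius_rec a2 k (flat a2 T).
Proof.
elim: k T => [|k IH] T //=.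
rewrite eq_tr; case: ifP => // _.
rewrite (perm_big _ (lattice_perm a1)) (perm_big _ (lattice_perm a2)) !big_map.
rewrite closeds_tr; congr (- _); apply: eq_big => [T'|T' _]; [exact: lt_tr | exact: IH].
Qed.

Lemma charpoly_tr : charpoly_arr a1 = charpoly_arr a2.
Proof.
rewrite /charpoly_arr (perm_big _ (lattice_perm a1)) (perm_big _ (lattice_perm a2)) !big_map.
rewrite closeds_tr; apply: eq_bigr => T _.
by rewrite rank_tr /mobius mobius_tr.
Qed.

End Transfer.
Lemma ex_min (T : eqType) (r : rel T) (s : seq T) :
  total r -> transitive r -> reflexive r -> s != [::] ->
  exists2 x, x \in s & forall y, y \in s -> r x y.
Proof.
move=> tot tr rf; elim: s => [|x s IH] // _.
case: (eqVneq s [::]) => [->|ne].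
  by exists x; rewrite ?inE // => y; rewrite inE => /eqP ->.
have [y ys hy] := IH ne.
case: (boolP (r x y)) => hxy.
  exists x; first by rewrite inE eqxx.
  move=> z; rewrite inE => /orP [/eqP ->|zs]; first exact: rf.
  exact: tr hxy (hy z zs).
exists y; first by rewrite inE ys orbT.
move=> z; rewrite inE => /orP [/eqP ->|zs]; last exact: hy.
by case/orP: (tot x y) => h //; rewrite h in hxy.
Qed.

Section Lucky.
Variable l : nat.
Variable le : rel 'X_{1..l}.
Hypothesis hle : term_order le.

Let rf : reflexive le. Proof. by case: hle. Qed.
Let anti : antisymmetric le. Proof. by case: hle. Qed.
Let tr : transitive le. Proof. by case: hle. Qed.
Let tot : total le. Proof. by case: hle. Qed.
Let addc m1 m2 m : le m1 m2 -> le (m1 + m)%MM (m2 + m)%MM. Proof. by case: hle => _ _ _ _ [h _]; apply: h. Qed.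
Let zer m : le 0%MM m. Proof. by case: hle => _ _ _ _ [_ h]; apply: h. Qed.

Lemma lmon_max (g : {mpoly int[l]}) m : m \in msupp g -> le m (lmon le g).
Proof.
rewrite /lmon; elim: (msupp g) => [|x s IH] //=.
set acc := foldr _ _ s.
rewrite inE => /orP [/eqP ->|ms].
  case: ifP => h; first exact: rf.
  by case/orP: (tot acc x) => h' //; rewrite h' in h.
case: ifP => h; last exact: IH.
exact: tr (IH ms) h.
Qed.

Lemma le_U j m : (U_(j)%MM <= m)%MM -> le U_(j)%MM m.
Proof.
move=> h; rewrite -(submK h).
by have := addc U_(j)%MM (zer (m - U_(j)%MM)%MM); rewrite add0m.
Qed.

Lemma lmon_X (d : int) m : d != 0 -> lmon le (d *: 'X_[m]) = m.
Proof.
move=> nz; rewrite /lmon.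
have -> : msupp (d *: 'X_[m] : {mpoly int[l]}) = [:: m].
  apply: perm_small_eq => //; have := msuppZ ('X_[m] : {mpoly int[l]}) nz.
  by rewrite msuppX.
by rewrite /= zer.
Qed.

Lemma lcoef_X (d : int) m : d != 0 -> lcoef le (d *: 'X_[m]) = d.
Proof. by move=> nz; rewrite /lcoef lmon_X // mcoeffZ mcoeffX eqxx mulr1. Qed.

Lemma lm_small (M : 'X_{1..l}) k : (M <= U_(k)%MM)%MM -> M = 0%MM \/ M = U_(k)%MM.
Proof.
move/mnm_lepP => h.
case: (posnP (M k)) => hk.
  left; apply/mnmP => i; rewrite mnm0E.
  case: (eqVneq k i) => [<-//|nki].
  by have := h i; rewrite mnm1E (negbTE nki) leqn0 => /eqP.
right; apply/mnmP => i; rewrite mnm1E.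
case: (eqVneq k i) => [<-|nki].
  by have := h k; rewrite mnm1E eqxx; move: hk; case: (M k) => [|[]].
by have := h i; rewrite mnm1E (negbTE nki) leqn0 => /eqP.
Qed.

End Lucky.

Section Ev.
Variables (l p : nat).
Definition ev (h : 'I_l -> 'F_p) (g : {mpoly int[l]}) : 'F_p := mmap ( *~%R 1) h g.

Lemma ev_lin h (al : 'rV[int]_l) : ev h (linpoly al) = \sum_j (al 0 j)%:~R * h j.
Proof.
rewrite /ev /linpoly raddf_sum /=; apply: eq_bigr => j _.
by rewrite rmorphM /= mmapC mmapX mmap1U.
Qed.

Lemma ev_ideal h gs g : (forall q, q \in gs -> ev h q = 0) -> in_ideal gs g -> ev h g = 0.
Proof.
move=> H [c ->]; rewrite /ev raddf_sum /=; apply: big1 => i _.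
by rewrite rmorphM /=; have := H _ (mem_nth 0 (ltn_ord i)); rewrite /ev => ->; rewrite mulr0.
Qed.

Lemma evE h g : ev h g = \sum_(m <- msupp g) (g@_m)%:~R * mmap1 h m.
Proof. by []. Qed.

Lemma ev0 g : ev (fun _ => 0) g = (g@_0%MM)%:~R.
Proof.
rewrite evE (bigID (fun m => m == 0%MM)) /= [X in _ + X]big1 ?addr0.
  case: (boolP (0%MM \in msupp g)) => h0.
    rewrite -big_filter.
    have -> : [seq m <- msupp g | m == 0%MM] = [:: 0%MM].
      by apply: filter_pred1_uniq => //; apply: msupp_uniq.
    by rewrite big_seq1 mmap11 mulr1.
  rewrite big1_seq; first by move: h0; rewrite mcoeff_msupp negbK => /eqP ->.
  by move=> m /andP [/eqP -> h]; rewrite h in h0.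
move=> m nz; rewrite /mmap1.
have [i hi] : exists i, (0 < m i)%N.
  case: (pickP (fun i => 0 < m i)%N) => [i hi|H]; first by exists i.
  move: nz; suff -> : m = 0%MM by rewrite eqxx.
  by apply/mnmP => i; rewrite mnm0E; move: (H i); rewrite lt0n => /negbFE /eqP.
by rewrite (bigD1 i) //= expr0n eqn0Ngt hi mul0r mulr0.
Qed.

End Ev.
Lemma Fp_int0 (p : nat) (z : int) : prime p ->
  ((z%:~R : 'F_p) == 0) = (p%:Z %| z)%Z.
Proof.
move=> pp; rewrite dvdzE /=.
case: z => m /=; first by rewrite -pmulrn -(dvdn_pcharf (pchar_Fp pp)).
by rewrite NegzE intrN oppr_eq0 -pmulrn -(dvdn_pcharf (pchar_Fp pp)).
Qed.

Section Main.
Variables (l n : nat) (alpha : 'I_n -> 'rV[int]_l).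

Definition fB (B : {set 'I_n}) (x0 : 'I_n) (i : 'I_l) : 'I_n := nth x0 (enum B) i.
Definition MZ B x0 : 'M[int]_l := \matrix_(i, j) alpha (fB B x0 i) 0 j.

Lemma fB_in (B : {set 'I_n}) x0 i : #|B| = l -> fB B x0 i \in B.
Proof. by move=> cB; rewrite /fB -mem_enum mem_nth // -cardE cB. Qed.

Section Sq.
Variables (K : fieldType) (a : 'I_n -> 'rV[K]_l).
Hypothesis ha : forall i j, a i 0 j = (alpha i 0 j)%:~R.

Lemma row_MZ (B : {set 'I_n}) x0 k : row k (map_mx ( *~%R 1) (MZ B x0)) = a (fB B x0 k).
Proof. by apply/rowP => j; rewrite !mxE ha. Qed.

Lemma rho_sq (B : {set 'I_n}) x0 : #|B| = l -> rho a B = \rank (map_mx ( *~%R (1 : K)) (MZ B x0)).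
Proof.
move=> cB; apply/eqP; rewrite eqn_leq /rho; apply/andP; split; apply: mxrankS.
  apply/row_subP => i; case: (boolP (i \in B)) => iB; last first.
    have -> : row i (rowsmx a B) = 0 by apply/rowP => j; rewrite !mxE (negbTE iB).
    exact: sub0mx.
  rewrite row_rowsmx //.
  have hi : (index i (enum B) < l)%N by rewrite -cB cardE index_mem mem_enum.
  have -> : i = fB B x0 (Ordinal hi) by rewrite /fB /= nth_index ?mem_enum.
  by rewrite -row_MZ; apply: row_sub.
apply/row_subP => i; rewrite row_MZ -(row_rowsmx a (fB_in x0 i cB)).
exact: row_sub.
Qed.

Lemma rank_full_det (M : 'M[K]_l) : (\rank M == l) = (\det M != 0).
Proof. by rewrite -/(row_free M) row_free_unit unitmxE unitfE. Qed.

Lemma det_MZ (B : {set 'I_n}) x0 : \det (map_mx ( *~%R 1) (MZ B x0) : 'M[K]_l) = (\det (MZ B x0))%:~R.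
Proof. by rewrite det_map_mx. Qed.

End Sq.

Variable p : nat.
Hypothesis pp : prime p.

Lemma aQE i j : arrQ alpha i 0 j = (alpha i 0 j)%:~R.
Proof. by rewrite /arrQ mxE. Qed.
Lemma aPE i j : arrP p alpha i 0 j = (alpha i 0 j)%:~R.
Proof. by rewrite /arrP mxE. Qed.

Lemma bas_PQ (B : {set 'I_n}) : #|B| = l -> indep (arrP p alpha) B -> indep (arrQ alpha) B.
Proof.
move=> cB; case: (set_0Vmem B) => [B0|[x0 x0B]].
  by rewrite /indep B0 !rho0 cards0.
rewrite /indep cB (rho_sq aPE x0 cB) (rho_sq aQE x0 cB) !rank_full_det !det_MZ.
rewrite intr_eq0; apply: contra => /eqP ->; by rewrite mulr0z.
Qed.


Lemma mmap1_0 (K : fieldType) (w : 'I_l -> K) (m : 'X_{1..l}) j :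
  (0 < m j)%N -> w j = 0 -> mmap1 w m = 0.
Proof. by move=> hj wj; rewrite /mmap1 (bigD1 j) //= wj expr0n eqn0Ngt hj mul0r. Qed.

Lemma bas_QP (le : rel 'X_{1..l}) (hle : term_order le)
  (luck : forall S : {set 'I_n}, #|S| = l -> \rank (flat (arrQ alpha) S) = 0%N ->
     sigma_lucky le [seq linpoly (alpha i) | i <- enum S] p)
  (B : {set 'I_n}) : #|B| = l -> indep (arrQ alpha) B -> indep (arrP p alpha) B.
Proof.
move=> cB iQ.
have rQ : rho (arrQ alpha) B = l by rewrite (eqP iQ).
have [G [uG nzG [inG _ gbG _]] luckG] := luck B cB (etrans (rank_flat _ _) (etrans (congr1 (subn l) rQ) (subnn l))).
case: (set_0Vmem B) => [B0|[x0 x0B]].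
  by rewrite /indep B0 rho0 cards0.
rewrite /indep cB; apply/negPn/negP => nP.
have ltP : (rho (arrP p alpha) B < l)%N by rewrite ltn_neqAle nP rho_le.
have nzF : flat (arrP p alpha) B != 0.
  by rewrite -mxrank_eq0 rank_flat subn_eq0 -ltnNge.
have [r hr] : exists r, row r (flat (arrP p alpha) B) != 0.
  case: (pickP (fun r => row r (flat (arrP p alpha) B) != 0)) => [r hr|H]; first by exists r.
  move: nzF; suff -> : flat (arrP p alpha) B = 0 by rewrite eqxx.
  apply/row_matrixP => r; rewrite row0; apply/eqP; move: (H r) => /negbFE; done.
set u := row r (flat (arrP p alpha) B) in hr.
have hu : forall c, c \in B -> \sum_j (alpha c 0 j)%:~R * u 0 j = 0.
  have := row_sub r (flat (arrP p alpha) B); rewrite sub_flat => /forall_inP H c cB'.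
  have := H c cB' => /eqP /matrixP /(_ 0 0) E; rewrite !mxE in E.
  by apply: etrans _ E; apply: eq_bigr => j _; rewrite !mxE mulrC.
pose w : 'I_l -> 'F_p := fun j => u 0 j.
have [k kin kmin] : exists2 k, k \in [seq j <- enum 'I_l | w j != 0] &
    forall y, y \in [seq j <- enum 'I_l | w j != 0] -> le U_(k)%MM U_(y)%MM.
  apply: ex_min.
  - by move=> j j' /=; case: hle => _ _ _ tot _; apply: tot.
  - by move=> j1 j2 j3 /=; case: hle => _ _ tr _ _; apply: tr.
  - by move=> j /=; case: hle => rf _ _ _ _; apply: rf.
  - apply/eqP => e; apply: (negP hr); apply/eqP/rowP => j.
    apply/eqP; apply/negPn/negP => nz.
    have : j \in [seq j <- enum 'I_l | w j != 0].
      by rewrite mem_filter mem_enum andbT /w; move: nz; rewrite [X in _ != X]mxE.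
    by rewrite e.
have wk : w k != 0 by move: kin; rewrite mem_filter => /andP [].
have kmin' : forall j, w j != 0 -> le U_(k)%MM U_(j)%MM.
  by move=> j nj; apply: kmin; rewrite mem_filter nj mem_enum.
set d := \det (MZ B x0).
have dnz : d != 0.
  by have := rQ; rewrite (rho_sq aQE x0 cB) => /eqP; rewrite rank_full_det det_MZ intr_eq0.
set gens := [seq linpoly (alpha i) | i <- enum B].
pose f : {mpoly int[l]} := d *: 'X_[U_(k)%MM].
have fI : in_ideal gens f.
  exists (mkseq (fun i => (\adj (MZ B x0) k (insubd k i))%:MP) l).
  have sg : size gens = l by rewrite size_map -cardE.
  rewrite -(big_mkord xpredT (fun i => _`_i * gens`_i)) sg big_mkord.
  have -> : \sum_(i < l) (mkseq (fun i => (\adj (MZ B x0) k (insubd k i))%:MP) l)`_i * gens`_i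
      = \sum_(i < l) (\adj (MZ B x0) k i)%:MP * linpoly (alpha (fB B x0 i)).
    apply: eq_bigr => i _; rewrite nth_mkseq // (nth_map x0) //; last by rewrite -cardE cB.
    have -> : insubd k i = i by apply: val_inj; rewrite val_insubd ltn_ord.
    by [].
  rewrite /linpoly.
  under eq_bigr => i _ do rewrite big_distrr /=.
  rewrite exchange_big /=.
  have E : forall j, \sum_(i < l) (\adj (MZ B x0) k i)%:MP * ((alpha (fB B x0 i) 0 j)%:MP * 'X_j)
      = ((\adj (MZ B x0) *m MZ B x0) k j)%:MP * 'X_j.
    move=> j; rewrite !mxE rmorph_sum /= mulr_suml; apply: eq_bigr => i _.
    by rewrite !mxE mulrA -rmorphM.
  rewrite (eq_bigr _ (fun j _ => E j)) mul_adj_mx (bigD1 k) //= big1 => [|j njk].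
    by rewrite mxE eqxx mulr1n addr0 mul_mpolyC.
  by rewrite mxE eq_sym (negbTE njk) mulr0n rmorph0 mul0r.
have fnz : f != 0.
  apply/eqP => /(congr1 (mcoeff U_(k)%MM)); rewrite mcoeffZ mcoeffX eqxx mulr1 mcoeff0.
  by apply/eqP.
have [g gG dvd] := gbG f fI fnz.
have gI := inG g gG.
have ev_gens : forall h : 'I_l -> 'F_p,
    (forall c, c \in B -> \sum_j (alpha c 0 j)%:~R * h j = 0) -> ev h g = 0.
  move=> h H; apply: ev_ideal gI => q /mapP [c cB' ->]; rewrite ev_lin; apply: H.
  by rewrite -mem_enum.
have e0 : (g@_0%MM)%:~R = 0 :> 'F_p.
  rewrite -ev0; apply: ev_gens => c _.
  by rewrite big1 // => j _; rewrite mulr0.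
have ew : ev w g = 0 by apply: ev_gens.
move: dvd; rewrite /term_dvd (lmon_X hle) // => /andP [_ hM].
have hl := luckG g gG.
case: (lm_small hM) => hM'.
  by move: hl; rewrite /lcoef hM' -(Fp_int0 _ pp) e0 eqxx.
have lk : (g@_U_(k)%MM)%:~R != 0 :> 'F_p by move: hl; rewrite /lcoef hM' -(Fp_int0 _ pp).
have kS : U_(k)%MM \in msupp g.
  by rewrite mcoeff_msupp; apply: contra lk => /eqP ->; rewrite mulr0z.
have : ev w g = (g@_0%MM)%:~R + (g@_U_(k)%MM)%:~R * w k.
  have anti : antisymmetric le by case: hle.
  have tr : transitive le by case: hle.
  have Uk_le : forall m : 'X_{1..l}, (0 < m k)%N -> (U_(k) <= m)%MM.
    move=> m hm; apply/mnm_lepP => i; rewrite mnm1E.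
    by case: (eqVneq k i) => [<-|] //.
  have term : {in msupp g, forall m, (g@_m)%:~R * mmap1 w m =
      (g@_m)%:~R * mmap1 (fun _ => 0 : 'F_p) m +
      (if m == U_(k)%MM then (g@_m)%:~R * w k else 0)}.
    move=> m mS; have lem : le m U_(k)%MM by have := lmon_max hle mS; rewrite hM'.
    case: (eqVneq m 0%MM) => [->|m0].
      by rewrite !mmap11 eq_sym mnm1_eq0 addr0.
    case: (eqVneq m U_(k)%MM) => [->|mk].
      by rewrite !mmap1U mulr0 add0r.
    have [j hj] : exists j, (0 < m j)%N.
      case: (pickP (fun i => 0 < m i)%N) => [i hi|H]; first by exists i.
      move: m0; suff -> : m = 0%MM by rewrite eqxx.
      by apply/mnmP => i; rewrite mnm0E; move: (H i); rewrite lt0n => /negbFE /eqP.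
    rewrite (@mmap1_0 _ (fun _ => 0) m j) // mulr0 add0r.
    have wj : w j = 0.
      case: (eqVneq j k) => [ejk|njk].
        exfalso; move: mk => /eqP; apply; apply: anti.
        by rewrite lem /=; apply: (le_U hle); apply: Uk_le; rewrite -ejk.
      apply/eqP; apply/negPn/negP => nwj.
      have h1 : le U_(j)%MM U_(k)%MM.
        apply: tr lem; apply: (le_U hle); apply/mnm_lepP => i; rewrite mnm1E.
        by case: (eqVneq j i) => [<-|].
      have := anti _ _ (introT andP (conj h1 (kmin' j nwj))).
      move=> /mnmP /(_ j); rewrite !mnm1E eqxx eq_sym (negbTE njk).
      done.
    by rewrite (mmap1_0 hj wj) mulr0.
  rewrite evE (eq_big_seq _ term) big_split /= -evE ev0; congr (_ + _).
  rewrite -big_mkcond -big_filter /=.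
  have -> : [seq m <- msupp g | m == U_(k)%MM] = [:: U_(k)%MM].
    by apply: filter_pred1_uniq => //; apply: msupp_uniq.
  by rewrite big_seq1.
rewrite ew e0 add0r => /esym /eqP; rewrite mulf_eq0 (negbTE lk) (negbTE wk).
done.
Qed.

Lemma rho_eq_all (le : rel 'X_{1..l}) (hle : term_order le)
  (luck : forall S : {set 'I_n}, #|S| = l -> \rank (flat (arrQ alpha) S) = 0%N ->
     sigma_lucky le [seq linpoly (alpha i) | i <- enum S] p)
  (ess : \rank (flat (arrQ alpha) [set: 'I_n]) = 0%N) T :
  rho (arrQ alpha) T = rho (arrP p alpha) T.
Proof.
have rQall : rho (arrQ alpha) setT = l.
  move: ess; rewrite rank_flat => /eqP; rewrite subn_eq0 => h.
  by apply/eqP; rewrite eqn_leq rho_le h.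
have i0 : forall (K : fieldType) (a : 'I_n -> 'rV[K]_l), indep a set0.
  by move=> K a; rewrite /indep rho0 cards0.
have QP : forall I, indep (arrQ alpha) I -> indep (arrP p alpha) I.
  move=> I iI; have [J [sIJ _ iJ rJ]] := extend (subsetT I) iI.
  have cJ : #|J| = l by rewrite -(eqP iJ) rJ rQall.
  by apply: indep_sub sIJ _; apply: (bas_QP hle luck) cJ iJ.
have [J0 [_ _ iJ0 rJ0]] := extend (subsetT set0) (i0 _ (arrQ alpha)).
have cJ0 : #|J0| = l by rewrite -(eqP iJ0) rJ0 rQall.
have rPall : rho (arrP p alpha) setT = l.
  apply/eqP; rewrite eqn_leq rho_le /=.
  have e : rho (arrP p alpha) J0 = l by rewrite -[RHS]cJ0; apply/eqP; apply: QP.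
  by apply: (leq_trans _ (rho_mono _ (subsetT J0))); rewrite e.
have PQ : forall I, indep (arrP p alpha) I -> indep (arrQ alpha) I.
  move=> I iI; have [J [sIJ _ iJ rJ]] := extend (subsetT I) iI.
  have cJ : #|J| = l by rewrite -(eqP iJ) rJ rPall.
  by apply: indep_sub sIJ _; apply: bas_PQ cJ iJ.
apply/eqP; rewrite eqn_leq; apply/andP; split.
  have [J [_ sJT iJ rJ]] := extend (sub0set T) (i0 _ (arrQ alpha)).
  by rewrite -rJ (eqP iJ) -(eqP (QP _ iJ)); apply: rho_mono sJT.
have [J [_ sJT iJ rJ]] := extend (sub0set T) (i0 _ (arrP p alpha)).
by rewrite -rJ (eqP iJ) -(eqP (PQ _ iJ)); apply: rho_mono sJT.
Qed.

End Main.

Unset Implicit Arguments.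

Theorem corollary4p15 (l n : nat) (alpha : 'I_n -> 'rV[int]_l)
  (le : rel 'X_{1..l}) (p : nat) :
  (* each alpha_i is a nonzero integer linear form ... *)
  (forall i, alpha i != 0) ->
  (* ... whose coefficients are not all divisible by any prime *)
  (forall i (q : nat), prime q -> ~~ [forall j, (q%:Z %| alpha i ord0 j)%Z]) ->
  (* the hyperplanes H_i in Q^l are distinct *)
  (forall i j, i != j -> flat (arrQ alpha) [set i] != flat (arrQ alpha) [set j]) ->
  (* essential: the intersection of all H_i is {0} *)
  \rank (flat (arrQ alpha) [set: 'I_n]) = 0%N ->
  (* sigma is a term ordering *)
  term_order le ->
  prime p ->
  (* p is good *)
  (forall i j : 'I_n, (i < j)%N -> forall c : 'F_p, arrP p alpha i != c *: arrP p alpha j) ->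
  (* p is (sigma, l)-lucky *)
  (forall S : {set 'I_n}, #|S| = l -> \rank (flat (arrQ alpha) S) = 0%N ->
     sigma_lucky le [seq linpoly (alpha i) | i <- enum S] p) ->
  charpoly_arr (arrQ alpha) = charpoly_arr (arrP p alpha).
Proof.
move=> _ _ _ ess hle pp _ luck.
apply: charpoly_tr => T.
exact: (rho_eq_all pp hle luck ess T).
Qed.
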